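(* Let $R,R'\subseteq\Lambda$ be two (not necessarily disjoint) rectangles and $RR'=R\cup R'$. Then $$\mathbb E^0_{RR'}=\mathbb E^0_R\circ\mathbb E^0_{R'},\qquad\mathcal P^\star_{RR'}=\mathcal P^\star_R\circ\mathcal P^\star_{R'},\qquad\mathcal P^\square_{RR'}=\mathcal P^\square_R\circ\mathcal P^\square_{R'},$$ where for $V\subseteq\Lambda$, $\mathcal P^\star_V=\prod_{s\in\mathcal S_V}\mathcal P^\star_s$, $\mathcal P^\square_V=\prod_{p\in\mathcal P_V}\mathcal P^\square_p$, and $\mathbb E^0_{RR'}$ is understood as $\mathcal P^\star_{RR'}\circ\mathcal P^\square_{RR'}\circ\frac{\mathrm{Tr}_{RR'}}{d_{RR'}}$ when $RR'$ is not a rectangle.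
   Context: Model: Let $G$ be a finite Abelian group with identity $1$, write $\bar g=g^{-1}$, and let $\hat G$ be its character group, with $\bar\chi$ the complex-conjugate character. For $N\ge2$, $\Lambda=\Lambda_N$ is the set of edges of the square lattice on the torus $\mathbb Z_N\times\mathbb Z_N$; horizontal edges are oriented to the left, vertical edges downward. Each edge $e$ carries $\mathcal H_e=\ell^2(G)$ with orthonormal basis $\{|g\rangle\}_{g\in G}$; for $V\subseteq\Lambda$, $\mathcal H_V=\bigotimes_{e\in V}\mathcal H_e$, $d_V=\dim\mathcal H_V$, $\mathcal B(\mathcal H_V)$ is identified with $\mathcal B(\mathcal H_V)\otimes 1_{\Lambda\setminus V}$, and $\frac{\mathrm{Tr}_V}{d_V}$ denotes $O\mapsto 1_V\otimes\frac1{d_V}\mathrm{Tr}_V(O)$. On $\ell^2(G)$ let $L^g=\sum_{h}|gh\rangle\langle h|$, $M^\chi=\sum_g\chi(g)|g\rangle\langle g|$; subscript $e$ indicates the edge. For a star (vertex) $s$, $ds$ is its four incident edges, $d_+s$ ($d_-s$) those pointing away from (towards) it; for a plaquette (face) $p$, $\partial p$ its four boundary edges, $\partial_+p$ ($\partial_-p$) those oriented counterclockwise (clockwise). $A_s(g)=\prod_{e\in d_+s}L^g_e\prod_{e\in d_-s}L^{\bar g}_e$, $B_p(\chi)=\prod_{e\in\partial_+p}M^\chi_e\prod_{e\in\partial_-p}M^{\bar\chi}_e$, $A_s(\chi)=\frac1{|G|}\sum_g\chi(g)A_s(g)$, $B_p(h)=\frac1{|G|}\sum_\chi\chi(h)B_p(\chi)$.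 For $V\subseteq\Lambda$, $\mathcal S_V$ (resp. $\mathcal P_V$) is the set of stars (resp. plaquettes) whose edge set meets $V$. Pinchings: $\mathcal P(P)(O)=POP+(1-P)O(1-P)$, $\mathcal P^\star_s=\prod_{\chi\in\hat G}\mathcal P(A_s(\chi))$, $\mathcal P^\square_p=\prod_{h\in G}\mathcal P(B_p(h))$. A rectangle is the set of all edges with both endpoints in a region $\{a,\dots,a+l_1\}\times\{b,\dots,b+l_2\}\subseteq\mathbb Z_N^2$, $0<l_1,l_2<N$. For a rectangle $R$, $\mathbb E^0_R=\lim_{t\to\infty}e^{t\mathcal L^{(0)}_R}$ is the infinite-temperature Davies conditional expectation, which equals $\mathcal P^\star_R\circ\mathcal P^\square_R\circ\frac{\mathrm{Tr}_R}{d_R}$. *)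

(* Defs.v *)
From HB Require Import structures.
From mathcomp Require Import all_boot all_order all_algebra all_fingroup all_solvable all_field all_character.
Set Implicit Arguments. Unset Strict Implicit. Unset Printing Implicit Defensive.
Import GRing.Theory Num.Theory.
Local Open Scope ring_scope.

Section Toric.
Variable N : nat.

(* vertices of the torus Z_N x Z_N; first coordinate increases to the right,
   second coordinate increases upwards *)
Definition vertex := ('Z_N * 'Z_N)%type.
(* edge (v,false): horizontal edge between v and v+(1,0);
   edge (v,true) : vertical edge between v and v+(0,1) *)
Definition edge := (vertex * bool)%type.

Definition e1 (v : vertex) : vertex := (v.1 + 1, v.2).
Definition e2 (v : vertex) : vertex := (v.1, v.2 + 1).

(* horizontal edges oriented to the left, vertical edges downward *)
Definition etail (e : edge) : vertex := if e.2 then e2 e.1 else e1 e.1.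
Definition ehead (e : edge) : vertex := e.1.

Definition dplus (s : vertex) : {set edge} := [set e | etail e == s].
Definition dminus (s : vertex) : {set edge} := [set e | ehead e == s].
Definition dstar (s : vertex) : {set edge} := dplus s :|: dminus s.

(* plaquette labelled by its lower-left corner p *)
Definition pbottom (p : vertex) : edge := (p, false).
Definition ptop (p : vertex) : edge := (e2 p, false).
Definition pleft (p : vertex) : edge := (p, true).
Definition pright (p : vertex) : edge := (e1 p, true).
(* counterclockwise / clockwise oriented boundary edges *)
Definition bplus (p : vertex) : {set edge} := [set ptop p; pleft p].
Definition bminus (p : vertex) : {set edge} := [set pbottom p; pright p].
Definition bdry (p : vertex) : {set edge} := bplus p :|: bminus p.

Definition starsOf (V : {set edge}) : {set vertex} :=
  [set s | [exists e in V, e \in dstar s]].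
Definition plaqsOf (V : {set edge}) : {set vertex} :=
  [set p | [exists e in V, e \in bdry p]].

Definition inRegion (a b : 'Z_N) (l1 l2 : nat) (w : vertex) : bool :=
  (val (w.1 - a)%R <= l1)%N && (val (w.2 - b)%R <= l2)%N.
Definition rectangle (R : {set edge}) : Prop :=
  exists (a b : 'Z_N) (l1 l2 : nat),
    [/\ (0 < l1 < N)%N, (0 < l2 < N)%N &
        R = [set e | inRegion a b l1 l2 (etail e) && inRegion a b l1 l2 (ehead e)]].

Variable gT : finGroupType.

(* basis configurations |c> of H_Lambda = tensor of l^2(G) over all edges *)
Definition conf := {ffun edge -> gT}.
(* operators on H_Lambda, given by their matrix elements <x|O|y> *)
Definition op := conf -> conf -> algC.

Definition opmul (A B : op) : op := fun x y => \sum_(z : conf) A x z * B z y.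
Definition op1 : op := fun x y => (x == y)%:R.
Definition opsub (A B : op) : op := fun x y => A x y - B x y.

Definition pinch (P : op) (O : op) : op :=
  fun x y => opmul (opmul P O) P x y
           + opmul (opmul (opsub op1 P) O) (opsub op1 P) x y.

Definition compseq (fs : seq (op -> op)) : op -> op :=
  foldr (fun f acc => f \o acc) id fs.

(* characters of G: the irreducible (= linear, G abelian) characters *)
Definition chr (i : Iirr [set: gT]%G) (g : gT) : algC := (tnth (irr [set: gT]%G) i) g.

(* A_s(g) = prod_{d_+ s} L^g prod_{d_- s} L^{g^-1} *)
Definition starAct (s : vertex) (g : gT) (c : conf) : conf :=
  [ffun e => if e \in dplus s then (g * c e)%g
             else if e \in dminus s then (g^-1 * c e)%g else c e].
Definition Astar_g (s : vertex) (g : gT) : op := fun x y => (x == starAct s g y)%:R.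

(* B_p(chi) = prod_{d_+ p} M^chi prod_{d_- p} M^{conj chi} *)
Definition Bsq_chi (p : vertex) (i : Iirr [set: gT]%G) : op := fun x y =>
  (x == y)%:R * (chr i (x (ptop p)) * chr i (x (pleft p))
                 * (chr i (x (pbottom p)))^* * (chr i (x (pright p)))^*).

Definition Astar (s : vertex) (i : Iirr [set: gT]%G) : op := fun x y =>
  (#|gT|%:R)^-1 * \sum_(g : gT) chr i g * Astar_g s g x y.
Definition Bsq (p : vertex) (h : gT) : op := fun x y =>
  (#|gT|%:R)^-1 * \sum_(i : Iirr [set: gT]%G) chr i h * Bsq_chi p i x y.

Definition Pstar_s (s : vertex) : op -> op :=
  compseq [seq pinch (Astar s i) | i <- enum 'I_(Nirr [set: gT]%G)].
Definition Psq_p (p : vertex) : op -> op :=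
  compseq [seq pinch (Bsq p h) | h <- enum gT].

Definition PstarV (V : {set edge}) : op -> op :=
  compseq [seq Pstar_s s | s <- enum (starsOf V)].
Definition PsqV (V : {set edge}) : op -> op :=
  compseq [seq Psq_p p | p <- enum (plaqsOf V)].

(* normalized partial trace Tr_V/d_V : O |-> 1_V (x) d_V^-1 Tr_V(O) *)
Definition merge (V : {set edge}) (z c : conf) : conf :=
  [ffun e => if e \in V then z e else c e].
Definition ptr (V : {set edge}) (O : op) : op := fun x y =>
  [forall e in V, x e == y e]%:R *
  ((#|gT|%:R ^+ #|V|)^-1 *
   \sum_(z : conf | [forall e in ~: V, z e == 1%g]) O (merge V z x) (merge V z y)).

Definition E0 (V : {set edge}) : op -> op := PstarV V \o PsqV V \o ptr V.

End Toric.

(* Main.v *)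
Require Import Defs.
From HB Require Import structures.
From mathcomp Require Import all_boot all_order all_algebra all_fingroup all_solvable all_field all_character.
From Stdlib Require Import FunctionalExtensionality.
From mathcomp Require Import ring.
Set Implicit Arguments. Unset Strict Implicit. Unset Printing Implicit Defensive.
Import GRing.Theory Num.Theory.
Local Open Scope ring_scope.

Section Chars.
Variable gT : finGroupType.
Hypothesis hab : abelian [set: gT].

Lemma mulgC' (g h : gT) : (g * h = h * g)%g.
Proof. exact: (centsP hab) g (in_setT g) h (in_setT h). Qed.

Lemma chr_lin (i : Iirr [set: gT]%G) : 'chi_i \is a linear_char.
Proof. exact: (char_abelianP _ hab). Qed.

Lemma chrM (i : Iirr [set: gT]%G) (g h : gT) : chr i (g * h)%g = chr i g * chr i h.
Proof. by rewrite /chr (lin_charM (chr_lin i)) ?inE. Qed.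

Lemma chrV (i : Iirr [set: gT]%G) (g : gT) : chr i (g^-1)%g = (chr i g)^*.
Proof. by rewrite /chr char_inv // irr_char. Qed.

Lemma chr1 (i : Iirr [set: gT]%G) : chr i 1%g = 1.
Proof. by rewrite /chr (lin_char1 (chr_lin i)). Qed.

Lemma Gnz : (#|gT|%:R : algC) != 0.
Proof. by rewrite pnatr_eq0 -lt0n -cardsT (cardG_gt0 [set: gT]%G). Qed.

Lemma sum_chr (g : gT) : \sum_i chr i g = #|gT|%:R * (g == 1%g)%:R.
Proof.
have := second_orthogonality_relation g (group1 [set: gT]%G).
rewrite class1G inE.
have -> : (\sum_i 'chi[[set: gT]%G]_i g * ('chi_i 1%g)^*) = \sum_i chr i g.
  by apply: eq_bigr => i _; rewrite -/(chr i 1%g) chr1 conjC1 mulr1.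
move=> ->; case: eqP => [->|_]; last by rewrite mulr0.
by rewrite mulr1 cent11T setTI cardsT.
Qed.

Lemma orth_chr (i j : Iirr [set: gT]%G) :
  \sum_h chr j h * chr i (h^-1)%g = #|gT|%:R * (i == j)%:R.
Proof.
have := cfdot_irr j i; rewrite cfdotE cardsT => H.
have : \sum_(x in [set: gT]) 'chi_j x * ('chi_i x)^* = #|gT|%:R * (j == i)%:R.
  by rewrite -H mulrA mulfV ?Gnz // mul1r.
rewrite eq_sym => <-; apply: eq_big => h; first by rewrite inE.
by rewrite chrV.
Qed.

End Chars.

Section PinchRing.
Variables (R : pzRingType) (I : eqType) (P : I -> R).
Definition pinchR (p o : R) := p * o * p + (1 - p) * o * (1 - p).

Lemma pinch_fold (l : seq I) (O : R) : uniq l ->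
  (forall i j, i \in l -> j \in l -> P i * P j = if i == j then P i else 0) ->
  foldr (fun i o => pinchR (P i) o) O l =
  \sum_(i <- l) P i * O * P i +
  (1 - \sum_(i <- l) P i) * O * (1 - \sum_(i <- l) P i).
Proof.
elim: l => [|i l IH] /=; first by rewrite !big_nil add0r subr0 mulr1 mul1r.
move=> /andP[il ul] hP.
rewrite IH //; last by move=> a b al bl; apply: hP; rewrite inE ?al ?bl orbT.
have hPij j : j \in l -> P i * P j = 0 /\ P j * P i = 0.
  move=> jl; have ij : (i == j) = false by apply/negbTE; apply: contraNneq il => ->.
  by rewrite !hP ?inE ?jl ?eqxx ?orbT // ij eq_sym ij.
have hii : P i * P i = P i by rewrite hP ?inE ?eqxx.
set S := \sum_(j <- l) P j.
have hPS : P i * S = 0 by rewrite /S mulr_sumr big1_seq // => j /andP[_ /hPij []].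
have hSP : S * P i = 0 by rewrite /S mulr_suml big1_seq // => j /andP[_ /hPij []].
have hPQ : P i * (1 - S) = P i by rewrite mulrBr hPS subr0 mulr1.
have hQP : (1 - S) * P i = P i by rewrite mulrBl hSP subr0 mul1r.
have hQ1 : (1 - P i) * (1 - S) = 1 - (P i + S).
  by rewrite mulrBl mul1r hPQ opprD addrA addrAC.
have hQ2 : (1 - S) * (1 - P i) = 1 - (P i + S).
  by rewrite mulrBr mulr1 hQP opprD addrA addrAC.
rewrite !big_cons /pinchR.
set A := \sum_(j <- l) P j * O * P j.
have hA1 : P i * A * P i = 0.
  rewrite /A mulr_sumr mulr_suml big1_seq // => j /andP[_ jl].
  have [h1 h2] := hPij j jl.
  by rewrite !mulrA h1 !mul0r.
have hA2 : (1 - P i) * A * (1 - P i) = A.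
  rewrite /A mulr_sumr mulr_suml; apply: eq_big_seq => j jl.
  have [h1 h2] := hPij j jl.
  rewrite !mulrA mulrBl mul1r h1 subr0 -!mulrA mulrBr mulr1 h2 subr0.
  by rewrite !mulrA.
have hB1 : P i * ((1 - S) * O * (1 - S)) * P i = P i * O * P i.
  by rewrite !mulrA hPQ -!mulrA hQP.
have hB2 : (1 - P i) * ((1 - S) * O * (1 - S)) * (1 - P i) =
    (1 - (P i + S)) * O * (1 - (P i + S)).
  by rewrite !mulrA hQ1 -!mulrA hQ2.
rewrite (mulrDr (P i)) (mulrDl _ _ (P i)) (mulrDr (1 - P i)) (mulrDl _ _ (1 - P i)).
rewrite hA1 hB1 hA2 hB2 add0r.
by rewrite addrA.

Qed.
End PinchRing.

Section Mx.
Variables (N : nat) (gT : finGroupType).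
Local Notation cf := (conf N gT).
Local Notation opT := (op N gT).
Local Notation n := #|cf|.

Definition mx (A : opT) : 'M[algC]_n := \matrix_(i, j) A (enum_val i) (enum_val j).

Lemma mxK (A : opT) x y : mx A (enum_rank x) (enum_rank y) = A x y.
Proof. by rewrite mxE !enum_rankK. Qed.

Lemma mx_mul (A B : opT) : mx (opmul A B) = mx A *m mx B.
Proof.
apply/matrixP => i j; rewrite !mxE /opmul.
rewrite (reindex (fun k : 'I_n => enum_val k)) /=; last by exists enum_rank => k _; rewrite ?enum_valK ?enum_rankK.
by apply: eq_bigr => k _; rewrite !mxE.
Qed.

Lemma mx1 : mx (@op1 N gT) = 1%:M.
Proof.
apply/matrixP => i j; rewrite !mxE /op1.
by rewrite (inj_eq (can_inj enum_valK)).
Qed.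

Lemma mxB (A B : opT) : mx (opsub A B) = mx A - mx B.
Proof. by apply/matrixP => i j; rewrite !mxE. Qed.

Lemma mx_pinch (P O : opT) : mx (pinch P O) = pinchR (mx P) (mx O).
Proof.
have e1 : (1 : 'M[algC]_n) = mx (@op1 N gT) by rewrite mx1.
rewrite /pinchR e1 -!mxB -!mulmxE -!mx_mul.
by apply/matrixP => i j; rewrite !mxE.
Qed.

Lemma mx_sum (J : Type) (l : seq J) (F : J -> opT) :
  mx (fun x y => \sum_(i <- l) F i x y) = \sum_(i <- l) mx (F i).
Proof. by apply/matrixP => i j; rewrite !mxE summxE; apply: eq_bigr => k _; rewrite mxE. Qed.

Lemma mx_compseq (J : Type) (l : seq J) (P : J -> opT) (O : opT) :
  mx (compseq [seq pinch (P i) | i <- l] O) =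
  foldr (fun i o => pinchR (mx (P i)) o) (mx O) l.
Proof. by elim: l => [|i l IH] //=; rewrite mx_pinch IH. Qed.

Lemma mx_eq (A B : opT) : mx A = mx B -> forall x y, A x y = B x y.
Proof. by move=> h x y; rewrite -!mxK h. Qed.

Lemma compseq_pinch (J : finType) (P : J -> opT) (O : opT) :
  (forall i j x y, opmul (P i) (P j) x y = (i == j)%:R * P i x y) ->
  (forall x y, \sum_i P i x y = op1 x y) ->
  forall x y, compseq [seq pinch (P i) | i <- enum J] O x y =
     \sum_i opmul (opmul (P i) O) (P i) x y.
Proof.
move=> hort hsum.
have hs : \sum_(i <- enum J) mx (P i) = 1.
  rewrite -mx_sum -[1]/(1%:M : 'M[algC]_n) -mx1; congr mx.
  by apply: functional_extensionality => a; apply: functional_extensionality => b; rewrite big_enum -hsum.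
suff h : mx (compseq [seq pinch (P i) | i <- enum J] O) =
         mx (fun x y => \sum_(i <- enum J) opmul (opmul (P i) O) (P i) x y).
  by move=> x y; rewrite (mx_eq h) big_enum.
rewrite mx_compseq mx_sum.
rewrite (@pinch_fold _ _ (fun i => mx (P i))) ?enum_uniq //; last first.
  move=> i j _ _; rewrite -mulmxE -mx_mul; case: eqP => [->|ne].
    by congr mx; apply: functional_extensionality => a; apply: functional_extensionality => b; rewrite hort eqxx mul1r.
  by apply/matrixP => a b; rewrite !mxE hort; move/eqP/negbTE: ne => ->; rewrite mul0r.
rewrite hs subrr mul0r mulr0 addr0.
by apply: eq_bigr => i _; rewrite !mx_mul !mulmxE.
Qed.
End Mx.

Lemma sum_eq1 (T : finType) (v : T) (F : T -> algC) :
  \sum_u F u * (u == v)%:R = F v.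
Proof.
rewrite (bigD1 v) //= eqxx mulr1 big1 ?addr0 // => u /negbTE ->; by rewrite mulr0.
Qed.

Section Star.
Variables (N : nat) (gT : finGroupType).
Hypothesis hab : abelian [set: gT].
Local Notation cf := (conf N gT).
Local Notation opT := (op N gT).

Definition sd (s : vertex N) (g : gT) (e : edge N) : gT :=
  if e \in dplus s then g else if e \in dminus s then g^-1%g else 1%g.

Lemma starActE s g (c : cf) e : starAct s g c e = (sd s g e * c e)%g.
Proof. by rewrite /starAct /sd ffunE; case: ifP => //; case: ifP => //; rewrite mul1g. Qed.

Lemma sdM s g h e : sd s (g * h) e = (sd s g e * sd s h e)%g.
Proof.
rewrite /sd; case: ifP => //; case: ifP => // _ _; last by rewrite mulg1.
by rewrite invMg mulgC'.
Qed.

Lemma sd1 s e : sd s 1 e = 1%g.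
Proof. by rewrite /sd; case: ifP => //; case: ifP => //; rewrite invg1. Qed.

Lemma starAct_comp s g h (c : cf) : starAct s g (starAct s h c) = starAct s (g * h) c.
Proof. by apply/ffunP => e; rewrite !starActE sdM mulgA. Qed.

Lemma starAct1 s (c : cf) : starAct s 1 c = c.
Proof. by apply/ffunP => e; rewrite starActE sd1 mul1g. Qed.

Lemma starActK s g (c : cf) : starAct s g^-1 (starAct s g c) = c.
Proof. by rewrite starAct_comp mulVg starAct1. Qed.

Lemma starActKV s g (c : cf) : starAct s g (starAct s g^-1 c) = c.
Proof. by rewrite starAct_comp mulgV starAct1. Qed.

Lemma starAct_eq s g (x u : cf) : (x == starAct s g u) = (u == starAct s g^-1 x).
Proof.
apply/eqP/eqP => [->|->]; by rewrite ?starActK ?starActKV.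
Qed.

Definition Tw (s : vertex N) (O : opT) : opT := fun x y =>
  (#|gT|%:R)^-1 * \sum_g O (starAct s g x) (starAct s g y).

End Star.

Lemma exch (I J : finType) (F : I -> J -> algC) :
  \sum_i \sum_j F i j = \sum_j \sum_i F i j.
Proof. exact: exchange_big. Qed.

Lemma reidx (I : finType) (h : I -> I) (F : I -> algC) :
  injective h -> \sum_i F i = \sum_i F (h i).
Proof. by move=> hi; apply: reindex_inj. Qed.

Lemma rearr4 (a b c d : algC) : a * b * c * d = (b * c) * (a * d).
Proof. by ring. Qed.

Section Star2.
Variables (N : nat) (gT : finGroupType).
Hypothesis hab : abelian [set: gT].
Local Notation cf := (conf N gT).
Local Notation opT := (op N gT).
Local Notation k := ((#|gT|%:R : algC)^-1).

Lemma Astar_ort (s : vertex N) (i j : Iirr [set: gT]%G) (x y : cf) :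
  opmul (Astar s i) (Astar s j) x y = (i == j)%:R * Astar s i x y.
Proof.
rewrite /opmul /Astar /Astar_g.
under eq_bigr do rewrite mulrACA.
rewrite -mulr_sumr.
have -> : \sum_(z : cf) (\sum_g chr i g * (x == starAct s g z)%:R) *
        (\sum_h chr j h * (z == starAct s h y)%:R) =
     \sum_g \sum_h chr i g * chr j h * (x == starAct s (g * h) y)%:R.
  under eq_bigr do rewrite mulr_suml.
  rewrite exch; apply: eq_bigr => g _.
  under eq_bigr do rewrite mulr_sumr.
  rewrite exch; apply: eq_bigr => h _.
  rewrite -(starAct_comp hab).
  rewrite (bigD1 (starAct s h y)) //= eqxx mulr1 big1 ?addr0; last by move=> z /negbTE ->; rewrite !mulr0.
  by rewrite mulrAC.
rewrite exch.
under eq_bigr => h _.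
  rewrite (reidx _ (mulIg (h^-1)%g)).
  under eq_bigr => g _ do rewrite mulgKV (chrM hab) rearr4.
  rewrite -mulr_sumr.
  over.
rewrite -mulr_suml.
rewrite (eq_bigr (fun h => chr j h * chr i (h^-1)%g)); last by move=> h _; rewrite mulrC.
rewrite orth_chr.
by field; rewrite (Gnz gT).
Qed.

Lemma Astar_sum (s : vertex N) (x y : cf) :
  \sum_i Astar s i x y = op1 x y.
Proof.
rewrite /Astar /Astar_g -mulr_sumr exch.
under eq_bigr => g _ do rewrite -mulr_suml (sum_chr hab) mulrAC.
by rewrite sum_eq1 starAct1 mulrA mulVf ?Gnz ?mul1r.
Qed.

Lemma opmulA_l (s : vertex N) i (O : opT) x v :
  opmul (Astar s i) O x v = k * \sum_g chr i g * O (starAct s (g^-1)%g x) v.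
Proof.
rewrite /opmul /Astar /Astar_g.
under eq_bigr do rewrite -mulrA mulr_suml.
rewrite -mulr_sumr exch; congr (_ * _); apply: eq_bigr => g _.
under eq_bigr do rewrite (starAct_eq hab) mulrAC.
by rewrite sum_eq1.
Qed.

Lemma opmulA_r (s : vertex N) i (O : opT) u y :
  opmul O (Astar s i) u y = k * \sum_h chr i h * O u (starAct s h y).
Proof.
rewrite /opmul /Astar /Astar_g.
under eq_bigr do rewrite mulrCA mulr_sumr.
rewrite -mulr_sumr exch; congr (_ * _); apply: eq_bigr => h _.
under eq_bigr do rewrite mulrCA mulrA.
by rewrite sum_eq1.
Qed.

Lemma Pstar_Tw (s : vertex N) (O : opT) x y : Pstar_s s O x y = Tw s O x y.
Proof.
rewrite /Pstar_s (compseq_pinch (P := Astar s)); last 2 first.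
- exact: Astar_ort.
- exact: Astar_sum.
under eq_bigr do rewrite opmulA_r.
under eq_bigr do under eq_bigr do rewrite opmulA_l mulrCA mulr_sumr.
under eq_bigr do rewrite -mulr_sumr mulrA.
rewrite -mulr_sumr exch.
under eq_bigr do rewrite exch.
under eq_bigr => h _ do under eq_bigr => g _ do
  (rewrite (eq_bigr (fun i => chr i (h * g)%g * O (starAct s (g^-1)%g x) (starAct s h y)));
   last by move=> i _; rewrite (chrM hab) mulrA).
under eq_bigr => h _ do under eq_bigr => g _ do rewrite -mulr_suml (sum_chr hab) -eq_invg_mul eq_sym mulrAC.
under eq_bigr => h _ do rewrite sum_eq1 invgK.
rewrite /Tw -mulr_sumr !mulrA mulfVK ?Gnz //.
Qed.
End Star2.

Section Plaq.
Variables (N : nat) (gT : finGroupType).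
Hypothesis hab : abelian [set: gT].
Local Notation cf := (conf N gT).
Local Notation opT := (op N gT).
Local Notation k := ((#|gT|%:R : algC)^-1).

Definition fp (p : vertex N) (c : cf) : gT :=
  (c (ptop p) * c (pleft p) * (c (pbottom p))^-1 * (c (pright p))^-1)%g.

Definition Qp (p : vertex N) (O : opT) : opT := fun x y =>
  (fp p x == fp p y)%:R * O x y.

Lemma diag_l (d : cf -> algC) (O : opT) x y :
  opmul (fun x y => (x == y)%:R * d x) O x y = d x * O x y.
Proof.
rewrite /opmul (bigD1 x) //= eqxx mul1r big1 ?addr0 // => u /negbTE.
by rewrite eq_sym => ->; rewrite !mul0r.
Qed.

Lemma diag_r (d : cf -> algC) (O : opT) x y :
  opmul O (fun x y => (x == y)%:R * d x) x y = O x y * d y.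
Proof.
rewrite /opmul (bigD1 y) //= eqxx mul1r big1 ?addr0 // => u /negbTE ->.
by rewrite mul0r mulr0.
Qed.

Lemma Bsq_chiE p i (x y : cf) : Bsq_chi p i x y = (x == y)%:R * chr i (fp p x).
Proof. by rewrite /Bsq_chi /fp -!chrV !(chrM hab). Qed.

Lemma BsqE p h (x y : cf) : Bsq p h x y = (x == y)%:R * (h * fp p x == 1)%g%:R.
Proof.
rewrite /Bsq.
under eq_bigr do rewrite Bsq_chiE mulrCA -(chrM hab).
by rewrite -mulr_sumr (sum_chr hab) mulrCA mulKf ?Gnz.
Qed.

Lemma Bsq_ort p h h' (x y : cf) :
  opmul (Bsq p h) (Bsq p h') x y = (h == h')%:R * Bsq p h x y.
Proof.
have -> : Bsq p h = fun x y => (x == y)%:R * (h * fp p x == 1)%g%:R.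
  by apply: functional_extensionality => a; apply: functional_extensionality => b; rewrite BsqE.
rewrite diag_l BsqE.
case: (x =P y) => [->|]; last by rewrite !mul0r !mulr0.
case: (h =P h') => [->|ne]; first by rewrite !mul1r -natrM mulnb andbb.
rewrite mul0r mul1r -natrM mulnb; case: eqP => //= e1; case: eqP => //= e2.
by case: ne; apply: (mulIg (fp p y)); rewrite e1 e2.
Qed.

Lemma Bsq_sum p (x y : cf) : \sum_h Bsq p h x y = op1 x y.
Proof.
under eq_bigr do rewrite BsqE -eq_invg_mul eq_invg_sym.
rewrite -mulr_sumr (bigD1 (fp p x)^-1)%g //= eqxx big1 ?addr0 ?mulr1 //.
by move=> h /negbTE ->.
Qed.

Lemma Psq_Qp p (O : opT) x y : Psq_p p O x y = Qp p O x y.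
Proof.
rewrite /Psq_p (compseq_pinch (P := Bsq p)); last 2 first.
- exact: Bsq_ort.
- exact: Bsq_sum.
have hB h : Bsq p h = fun x y => (x == y)%:R * (h * fp p x == 1)%g%:R.
  by apply: functional_extensionality => a; apply: functional_extensionality => b; rewrite BsqE.
under eq_bigr => h _ do rewrite hB diag_r diag_l.
rewrite /Qp.
under eq_bigr do rewrite -eq_invg_mul eq_invg_sym mulrC mulrA -natrM mulnb.
rewrite -mulr_suml (bigD1 (fp p x)^-1)%g //= eqxx /= big1 ?addr0.
  by rewrite andbT -eq_invg_mul invgK.
by move=> h /negbTE ->; rewrite andbF.
Qed.

End Plaq.

Lemma sum_prod (E T : finType) (F : E -> T -> algC) :
  \sum_(f : {ffun E -> T}) \prod_e F e (f e) = \prod_e \sum_t F e t.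
Proof. by rewrite bigA_distr_bigA. Qed.

Lemma eq_prod (E T : finType) (f g : {ffun E -> T}) :
  ((f == g)%:R : algC) = \prod_e (f e == g e)%:R.
Proof.
case: eqP => [->|ne]; first by rewrite big1 // => e _; rewrite eqxx.
have [e he] : exists e, f e != g e.
  apply/existsP; apply: contraT; rewrite negb_exists => /forallP h.
  by case: ne; apply/ffunP => e; have := h e; rewrite negbK => /eqP.
by rewrite (bigD1 e) //= (negbTE he) mul0r.
Qed.

Lemma prod_ind (E : finType) (P : pred E) (b : E -> bool) :
  \prod_(e | P e) ((b e)%:R : algC) = [forall (e | P e), b e]%:R.
Proof.
case: forallP => h; first by rewrite big1 // => e pe; move/implyP: (h e) => ->.
have [e he] : exists e, P e && ~~ b e.
  apply/existsP; apply: contraT; rewrite negb_exists => /forallP h'.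
  by case: h => e; apply/implyP => pe; have := h' e; rewrite pe /= negbK.
case/andP: he => pe nb.
by rewrite (bigD1 e) //= (negbTE nb) mul0r.
Qed.

Lemma pairs (I J : finType) (F : I -> J -> algC) :
  \sum_i \sum_j F i j = \sum_(p : I * J) F p.1 p.2.
Proof. exact: pair_bigA. Qed.

Section Tr.
Variables (N : nat) (gT : finGroupType).
Hypothesis hab : abelian [set: gT].
Local Notation cf := (conf N gT).
Local Notation opT := (op N gT).
Local Notation n := (#|gT|%:R : algC).

Definition agree (V : {set edge N}) (x y : cf) := [forall e in V, x e == y e].

Definition Tr (V : {set edge N}) (O : opT) : opT := fun x y =>
  (agree V x y)%:R * ((n ^+ #|{: edge N}|)^-1 *
   \sum_(z : cf) O (Defs.merge V z x) (Defs.merge V z y)).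

Definition c1 : cf := [ffun _ => 1%g].

Lemma count_merge (V : {set edge N}) (w : cf) :
  \sum_(z : cf) ((w == Defs.merge V z c1)%:R : algC) =
  [forall e in ~: V, w e == 1%g]%:R * n ^+ #|~: V|.
Proof.
under eq_bigr do rewrite eq_prod.
under eq_bigr do under eq_bigr do rewrite !ffunE.
rewrite (sum_prod (fun e t => ((w e == if e \in V then t else 1%g)%:R : algC))).
rewrite (bigID (fun e => e \in V)) /=.
rewrite big1 ?mul1r; last first.
  by move=> e eV; rewrite eV (bigD1 (w e)) //= eqxx big1 ?addr0 // => t /negbTE; rewrite eq_sym => ->.
under eq_bigr => e eV do rewrite (negbTE eV) sumr_const -[(_ *+ _) *+ _]mulr_natr.
rewrite big_split /= prod_ind prodr_const.
congr (_ * _); last by rewrite -[#|_|]/(#|[pred e | e \notin V]|); congr (_ ^+ _); apply: eq_card => e; rewrite !inE.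
have -> : [forall (e | e \notin V), w e == 1%g] = [forall e in ~: V, w e == 1%g].
  by apply: eq_forallb => e; rewrite inE.
by [].
Qed.


Lemma sum_merge_restrict (V : {set edge N}) (F : cf -> algC) :
  \sum_(z : cf) F (Defs.merge V z c1) =
  n ^+ #|~: V| * \sum_(z : cf | [forall e in ~: V, z e == 1%g]) F z.
Proof.
have h w : \sum_(z : cf) F w * (w == Defs.merge V z c1)%:R =
    F w * ([forall e in ~: V, w e == 1%g]%:R * n ^+ #|~: V|).
  by rewrite -mulr_sumr count_merge.
transitivity (\sum_(w : cf) \sum_(z : cf) F w * (w == Defs.merge V z c1)%:R).
  by rewrite exch; apply: eq_bigr => z _; rewrite sum_eq1.
rewrite (eq_bigr _ (fun w _ => h w)).
rewrite mulr_sumr [in RHS]big_mkcond /=; apply: eq_bigr => w _.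
by case: ifP => _; rewrite ?mul1r ?mul0r ?mulr0 // mulrC.
Qed.

Lemma merge_merge (V : {set edge N}) (z c c' : cf) :
  Defs.merge V (Defs.merge V z c') c = Defs.merge V z c.
Proof. by apply/ffunP => e; rewrite !ffunE; case: (e \in V). Qed.

Lemma nnz : n != 0.
Proof. exact: Gnz. Qed.

Lemma ptr_Tr (V : {set edge N}) (O : opT) x y : ptr V O x y = Tr V O x y.
Proof.
rewrite /ptr /Tr /agree; congr (_ * _).
have -> : \sum_(z : cf) O (Defs.merge V z x) (Defs.merge V z y) =
  \sum_(z : cf) (fun w => O (Defs.merge V w x) (Defs.merge V w y)) (Defs.merge V z c1).
  by apply: eq_bigr => z _; rewrite !merge_merge.
rewrite (sum_merge_restrict V (fun w => O (Defs.merge V w x) (Defs.merge V w y))).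
rewrite mulrA; congr (_ * _).
rewrite -(cardsC V) exprD invfM -mulrA mulVf ?mulr1 //.
by rewrite expf_neq0 // nnz.
Qed.

Lemma agree_merge (A B : {set edge N}) (x y z : cf) : agree A x y ->
  agree B (Defs.merge A z x) (Defs.merge A z y) = agree (A :|: B) x y.
Proof.
move=> /forallP hA; apply/forallP/forallP => h e.
- apply/implyP; rewrite inE => /orP[eA|eB]; first exact: (implyP (hA e)).
  have := implyP (h e) eB; rewrite !ffunE; case: ifP => // eA _.
  exact: (implyP (hA e)).
- apply/implyP => eB; rewrite !ffunE; case: ifP => // _.
  by apply: (implyP (h e)); rewrite inE eB orbT.
Qed.

Lemma agree_sub (A B : {set edge N}) (x y : cf) :
  agree (A :|: B) x y -> agree A x y.
Proof.
move=> /forallP h; apply/forallP => e; apply/implyP => eA.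
by apply: (implyP (h e)); rewrite inE eA.
Qed.

Lemma merge_comp (A B : {set edge N}) (x z w : cf) :
  Defs.merge B w (Defs.merge A z x) = Defs.merge (A :|: B) (Defs.merge B w z) x.
Proof.
apply/ffunP => e; rewrite !ffunE inE.
by case: (e \in B); case: (e \in A).
Qed.

Lemma sum_pairs_merge (B : {set edge N}) (H : cf -> algC) :
  \sum_(z : cf) \sum_(w : cf) H (Defs.merge B w z) = n ^+ #|{: edge N}| * \sum_(u : cf) H u.
Proof.
pose phi (p : cf * cf) := (Defs.merge B p.2 p.1, Defs.merge B p.1 p.2).
have phiK : cancel phi phi.
  move=> [z w]; rewrite /phi /=; congr (_, _); apply/ffunP => e; rewrite !ffunE;
  by case: (e \in B).
transitivity (\sum_(p : cf * cf) (fun p => H p.1) (phi p)).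
  by rewrite pairs.
rewrite -(reidx (fun p => H p.1) (can_inj phiK)) /=.
rewrite -(pairs (fun z w => H z)) /=.
under eq_bigr do rewrite sumr_const.
rewrite mulr_sumr; apply: eq_bigr => u _.
rewrite -[LHS]mulr_natr mulrC; congr (_ * _).
by rewrite card_ffun natrX.
Qed.

Lemma Tr_comp (A B : {set edge N}) (O : opT) x y :
  Tr A (Tr B O) x y = Tr (A :|: B) O x y.
Proof.
rewrite /Tr.
case hA: (agree A x y); last first.
  case hAB: (agree (A :|: B) x y); last by rewrite !mul0r.
  by rewrite (agree_sub hAB) in hA.
rewrite mul1r.
under eq_bigr => z _ do rewrite (agree_merge _ _ hA).
under eq_bigr => z _ do under eq_bigr => w _ do rewrite !merge_comp.
rewrite -mulr_sumr -mulr_sumr.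
rewrite (sum_pairs_merge B (fun u => O (Defs.merge (A :|: B) u x) (Defs.merge (A :|: B) u y))).
set K := _ ^- _; set c := (agree _ _ _)%:R; set S := \sum_(u : cf) _.
have hK : K * #|gT|%:R ^+ #|{: edge N}| = 1 by rewrite mulVf // expf_neq0 // nnz.
by rewrite mulrCA [K * (_ * S)]mulrA hK mul1r.
Qed.
End Tr.

Section Comm.
Variables (N : nat) (gT : finGroupType).
Hypothesis hab : abelian [set: gT].
Local Notation cf := (conf N gT).
Local Notation opT := (op N gT).
Local Notation n := (#|gT|%:R : algC).

Lemma mulgACA' (a b c d : gT) : ((a * b) * (c * d) = (a * c) * (b * d))%g.
Proof. by rewrite -!mulgA (mulgA b) (mulgC' hab b c) -!mulgA. Qed.

Definition mulc (d c : cf) : cf := [ffun e => (d e * c e)%g].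

Lemma fp_mulc p (d c : cf) : fp p (mulc d c) = (fp p d * fp p c)%g.
Proof.
rewrite /fp !ffunE !invMg.
set d1 := d (ptop p); set d2 := d (pleft p); set d3 := d (pbottom p); set d4 := d (pright p).
set c1 := c (ptop p); set c2 := c (pleft p); set c3 := c (pbottom p); set c4 := c (pright p).
rewrite (mulgC' hab c3^-1) (mulgC' hab c4^-1).
rewrite (mulgACA' d1 c1 d2 c2) (mulgACA' (d1 * d2) (c1 * c2) d3^-1 c3^-1).
by rewrite (mulgACA' (d1 * d2 * d3^-1) (c1 * c2 * c3^-1) d4^-1 c4^-1).
Qed.

Lemma starAct_mulc s g (c : cf) : starAct s g c = mulc [ffun e => sd s g e] c.
Proof. by apply/ffunP => e; rewrite starActE !ffunE. Qed.

Lemma fp_starAct p s g (x y : cf) :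
  (fp p (starAct s g x) == fp p (starAct s g y)) = (fp p x == fp p y).
Proof. by rewrite !starAct_mulc !fp_mulc (inj_eq (mulgI _)). Qed.

Lemma merge_mulc (A : {set edge N}) (z x : cf) :
  Defs.merge A z x = mulc [ffun e => if e \in A then (z e * (x e)^-1)%g else 1%g] x.
Proof. by apply/ffunP => e; rewrite !ffunE; case: (e \in A); rewrite ?mulgKV ?mul1g. Qed.

Lemma fp_merge (A : {set edge N}) p (x y z : cf) : agree A x y ->
  (fp p (Defs.merge A z x) == fp p (Defs.merge A z y)) = (fp p x == fp p y).
Proof.
move=> /forallP hA.
have -> : Defs.merge A z y =
   mulc [ffun e => if e \in A then (z e * (x e)^-1)%g else 1%g] y.
  apply/ffunP => e; rewrite !ffunE; case eA: (e \in A); last by rewrite mul1g.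
  by have := implyP (hA e) eA => /eqP ->; rewrite mulgKV.
by rewrite merge_mulc !fp_mulc (inj_eq (mulgI _)).
Qed.

Lemma fp_merge_out (A : {set edge N}) p (x z : cf) : p \notin plaqsOf A ->
  fp p (Defs.merge A z x) = fp p x.
Proof.
move=> hp.
have hn e : e \in bdry p -> e \notin A.
  move=> eb; apply: contra hp => eA; rewrite inE; apply/existsP; exists e; by rewrite eA.
have h e : e \in bdry p -> Defs.merge A z x e = x e by move=> eb; rewrite ffunE (negbTE (hn e eb)).
by rewrite /fp !h // !inE eqxx ?orbT.
Qed.

End Comm.

Section Comm2.
Variables (N : nat) (gT : finGroupType).
Hypothesis hab : abelian [set: gT].
Local Notation cf := (conf N gT).
Local Notation opT := (op N gT).
Local Notation n := (#|gT|%:R : algC).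

Lemma mergeE (V : {set edge N}) (z c : cf) e :
  Defs.merge V z c e = if e \in V then z e else c e.
Proof. by rewrite ffunE. Qed.

Lemma starAct_merge (A : {set edge N}) s g (z x : cf) :
  starAct s g (Defs.merge A z x) = Defs.merge A (starAct s g z) (starAct s g x).
Proof. by apply/ffunP => e; rewrite !starActE !mergeE; case: (e \in A); rewrite starActE. Qed.

Lemma agree_starAct (A : {set edge N}) s g (x y : cf) :
  agree A (starAct s g x) (starAct s g y) = agree A x y.
Proof.
by apply/forallP/forallP => h e; have := h e; rewrite !starActE (inj_eq (mulgI _)).
Qed.

Lemma Tr_Tw (A : {set edge N}) s (O : opT) x y :
  Tr A (Tw s O) x y = Tw s (Tr A O) x y.
Proof.
rewrite /Tr /Tw.
under eq_bigr => z _ do under eq_bigr => g _ do rewrite !starAct_merge.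
have hz g : \sum_(z : cf) O (Defs.merge A (starAct s g z) (starAct s g x))
                            (Defs.merge A (starAct s g z) (starAct s g y)) =
            \sum_(z : cf) O (Defs.merge A z (starAct s g x)) (Defs.merge A z (starAct s g y)).
  by rewrite [RHS](reidx _ (can_inj (starActK hab s g))).
rewrite -mulr_sumr exch (eq_bigr _ (fun g _ => hz g)).
under [in RHS]eq_bigr => g _ do rewrite agree_starAct.
rewrite -[in RHS]mulr_sumr.
set K := _^-1; set k := _^-1; set c := (agree _ _ _)%:R.
rewrite [in RHS]mulrCA -mulr_sumr.
by rewrite [K * _]mulrCA.
Qed.

Lemma Qp_Tr_Qp (A : {set edge N}) p (O : opT) x y :
  Qp p (Tr A (Qp p O)) x y = Qp p (Tr A O) x y.
Proof.
rewrite /Qp /Tr.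
case hA: (agree A x y); last by rewrite !mul0r !mulr0.
case hf: (fp p x == fp p y); last by rewrite !mul0r.
congr (_ * (_ * (_ * _))); apply: eq_bigr => z _.
by rewrite (fp_merge hab _ _ hA) hf mul1r.
Qed.

Lemma Tr_Qp (A : {set edge N}) p (O : opT) x y : p \notin plaqsOf A ->
  Tr A (Qp p O) x y = Qp p (Tr A O) x y.
Proof.
move=> hp; rewrite /Qp /Tr.
under eq_bigr => z _ do rewrite (fp_merge_out x z hp) (fp_merge_out y z hp).
rewrite -mulr_sumr.
by ring.
Qed.

Lemma Tw_Qp s p (O : opT) x y : Tw s (Qp p O) x y = Qp p (Tw s O) x y.
Proof.
rewrite /Tw /Qp.
under eq_bigr => g _ do rewrite (fp_starAct hab).
by rewrite -mulr_sumr mulrCA.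
Qed.

Lemma Tw_Tw s t (O : opT) x y : Tw s (Tw t O) x y = Tw t (Tw s O) x y.
Proof.
rewrite /Tw -!mulr_sumr mulrCA; congr (_ * (_ * _)).
rewrite exch; apply: eq_bigr => h _; apply: eq_bigr => g _.
have e c : starAct s g (starAct t h c) = starAct t h (starAct s g c).
  by apply/ffunP => e; rewrite !starActE !mulgA (mulgC' hab (sd s g e)).
by rewrite !e.
Qed.

Lemma Tw_idem s (O : opT) x y : Tw s (Tw s O) x y = Tw s O x y.
Proof.
rewrite /Tw -mulr_sumr.
under eq_bigr => i _ do under eq_bigr => g _ do rewrite !(starAct_comp hab).
have hg g : \sum_h O (starAct s (h * g)%g x) (starAct s (h * g)%g y) =
            \sum_h O (starAct s h x) (starAct s h y).
  by rewrite [RHS](reidx _ (mulIg g)).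
rewrite (eq_bigr _ (fun g _ => hg g)) sumr_const -[(\sum_h _) *+ _]mulr_natr.
rewrite [_ * #|_|%:R]mulrC [_^-1 * (#|_|%:R * _)]mulrA mulVf ?mul1r //.
exact: Gnz.
Qed.

End Comm2.

Section Abs.
Variables (X : Type) (I : eqType).

Definition Cs (T : I -> X -> X) (s : seq I) : X -> X :=
  foldr (fun f acc => f \o acc) id [seq T i | i <- s].

Lemma Cs_cons T i s x : Cs T (i :: s) x = T i (Cs T s x).
Proof. by []. Qed.

Lemma Cs_cat T s1 s2 x : Cs T (s1 ++ s2) x = Cs T s1 (Cs T s2 x).
Proof. by elim: s1 => //= i s1 IH; rewrite /Cs /= -/(Cs T _) IH. Qed.

Lemma comm_C (T : I -> X -> X) (f : X -> X) s :
  (forall i, i \in s -> forall x, f (T i x) = T i (f x)) ->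
  forall x, f (Cs T s x) = Cs T s (f x).
Proof.
elim: s => //= i s IH h x.
rewrite /Cs /= -!/(Cs T _) h ?inE ?eqxx // IH // => j js; apply: h; by rewrite inE js orbT.
Qed.

Variable T : I -> X -> X.
Hypothesis Tcomm : forall i j x, T i (T j x) = T j (T i x).
Hypothesis Tidem : forall i x, T i (T i x) = T i x.

Lemma C_absorb i s : i \in s -> forall x, T i (Cs T s x) = Cs T s x.
Proof.
elim: s => //= j s IH; rewrite inE => /orP[/eqP->|js] x.
  by rewrite Cs_cons Tidem.
by rewrite !Cs_cons Tcomm IH.
Qed.

Lemma C_undup s x : Cs T (undup s) x = Cs T s x.
Proof.
elim: s x => //= i s IH x; case: ifP => iS.
  by rewrite IH Cs_cons C_absorb.
by rewrite !Cs_cons IH.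
Qed.

Lemma C_comm s1 s2 x : Cs T s1 (Cs T s2 x) = Cs T s2 (Cs T s1 x).
Proof.
elim: s1 x => //= i s1 IH x.
rewrite !Cs_cons IH; apply: comm_C => j _ y; exact: Tcomm.
Qed.

Lemma C_perm s1 s2 : perm_eq s1 s2 -> forall x, Cs T s1 x = Cs T s2 x.
Proof.
move=> hp; apply: (@catCA_perm_ind I (fun s => forall x, Cs T s1 x = Cs T s x) _ s1 s2 hp) => //.
by move=> a b c h x; rewrite h !Cs_cat C_comm.
Qed.

End Abs.

Section Abs2.
Variables (X : Type) (I : finType).
Variable T : I -> X -> X.
Hypothesis Tcomm : forall i j x, T i (T j x) = T j (T i x).
Hypothesis Tidem : forall i x, T i (T i x) = T i x.

Lemma C_union (A B : {set I}) x :
  Cs T (enum (A :|: B)) x = Cs T (enum A) (Cs T (enum B) x).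
Proof.
rewrite -Cs_cat -(C_undup Tcomm Tidem (enum A ++ enum B)).
apply: C_perm => //; apply: uniq_perm; rewrite ?enum_uniq ?undup_uniq // => i.
by rewrite mem_undup mem_cat !mem_enum inE.
Qed.
End Abs2.

Lemma opext N gT (A B : op N gT) : (forall x y, A x y = B x y) -> A = B.
Proof. by move=> h; apply: functional_extensionality => x; apply: functional_extensionality => y. Qed.

Section Main.
Variables (N : nat) (gT : finGroupType).
Hypothesis hab : abelian [set: gT].
Local Notation cf := (conf N gT).
Local Notation opT := (op N gT).

Lemma starsOf_union (A B : {set edge N}) : starsOf (A :|: B) = starsOf A :|: starsOf B.
Proof.
apply/setP => s; rewrite !inE; apply/existsP/orP.
- move=> [e /andP[]]; rewrite inE => /orP[eA|eB] es.
  + by left; apply/existsP; exists e; rewrite eA.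
  + by right; apply/existsP; exists e; rewrite eB.
- by move=> [] /existsP [e /andP[ea es]]; exists e; rewrite inE ea ?orbT.
Qed.

Lemma plaqsOf_union (A B : {set edge N}) : plaqsOf (A :|: B) = plaqsOf A :|: plaqsOf B.
Proof.
apply/setP => s; rewrite !inE; apply/existsP/orP.
- move=> [e /andP[]]; rewrite inE => /orP[eA|eB] es.
  + by left; apply/existsP; exists e; rewrite eA.
  + by right; apply/existsP; exists e; rewrite eB.
- by move=> [] /existsP [e /andP[ea es]]; exists e; rewrite inE ea ?orbT.
Qed.

Lemma Pstar_fun : @Pstar_s N gT = @Tw N gT.
Proof.
apply: functional_extensionality => s; apply: functional_extensionality => O.
by apply: opext => x y; rewrite (Pstar_Tw hab).
Qed.

Lemma Psq_fun : @Psq_p N gT = @Qp N gT.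
Proof.
apply: functional_extensionality => s; apply: functional_extensionality => O.
by apply: opext => x y; rewrite (Psq_Qp hab).
Qed.

Lemma ptr_fun : @ptr N gT = @Tr N gT.
Proof.
apply: functional_extensionality => s; apply: functional_extensionality => O.
by apply: opext => x y; rewrite ptr_Tr.
Qed.

Lemma PstarV_C V O : PstarV V O = Cs (@Tw N gT) (enum (starsOf V)) O.
Proof. by rewrite /PstarV Pstar_fun. Qed.

Lemma PsqV_C V O : PsqV V O = Cs (@Qp N gT) (enum (plaqsOf V)) O.
Proof. by rewrite /PsqV Psq_fun. Qed.

Lemma Tw_comm s t (O : opT) : Tw s (Tw t O) = Tw t (Tw s O).
Proof. by apply: opext => x y; rewrite (Tw_Tw hab). Qed.
Lemma Tw_id s (O : opT) : Tw s (Tw s O) = Tw s O.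
Proof. by apply: opext => x y; rewrite (Tw_idem hab). Qed.
Lemma Qp_comm s t (O : opT) : Qp s (Qp t O) = Qp t (Qp s O).
Proof. by apply: opext => x y; rewrite /Qp mulrCA. Qed.
Lemma Qp_id s (O : opT) : Qp s (Qp s O) = Qp s O.
Proof. by apply: opext => x y; rewrite /Qp mulrA -natrM mulnb andbb. Qed.

Lemma part2 (A B : {set edge N}) (O : opT) :
  PstarV (A :|: B) O = PstarV A (PstarV B O).
Proof. by rewrite !PstarV_C starsOf_union (C_union Tw_comm Tw_id). Qed.

Lemma part3 (A B : {set edge N}) (O : opT) :
  PsqV (A :|: B) O = PsqV A (PsqV B O).
Proof. by rewrite !PsqV_C plaqsOf_union (C_union Qp_comm Qp_id). Qed.

Lemma part1 (A B : {set edge N}) (O : opT) :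
  E0 (A :|: B) O = E0 A (E0 B O).
Proof.
rewrite /E0 /= !PstarV_C !PsqV_C ptr_fun starsOf_union plaqsOf_union.
rewrite (C_union Tw_comm Tw_id) (C_union Qp_comm Qp_id).
have hTr X : Tr (A :|: B) X = Tr A (Tr B X) by apply: opext => x y; rewrite Tr_comp.
have s1 X : Tr A ((Cs (@Tw N gT) (enum (starsOf B))) X) = (Cs (@Tw N gT) (enum (starsOf B))) (Tr A X).
  by apply: comm_C => s _ Y; apply: opext => x y; rewrite Tr_Tw.
have s2 X : (Cs (@Qp N gT) (enum (plaqsOf A))) ((Cs (@Tw N gT) (enum (starsOf B))) X) = (Cs (@Tw N gT) (enum (starsOf B))) ((Cs (@Qp N gT) (enum (plaqsOf A))) X).
  apply: comm_C => s _ Y; apply: esym; apply: comm_C => p _ Z.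
  by apply: opext => x y; rewrite (Tw_Qp hab).
have s3 X : (Cs (@Qp N gT) (enum (plaqsOf A))) (Tr A ((Cs (@Qp N gT) (enum (plaqsOf B))) X)) = (Cs (@Qp N gT) (enum (plaqsOf B))) ((Cs (@Qp N gT) (enum (plaqsOf A))) (Tr A X)).
  apply: (comm_C (f := fun Y => (Cs (@Qp N gT) (enum (plaqsOf A))) (Tr A Y))) => p _ Y.
  case hp: (p \in plaqsOf A).
    have hab1 Z : (Cs (@Qp N gT) (enum (plaqsOf A))) (Qp p Z) = (Cs (@Qp N gT) (enum (plaqsOf A))) Z.
      by rewrite -(comm_C (T := @Qp N gT) (f := Qp p)) ?(C_absorb Qp_comm Qp_id) ?mem_enum // => q _ W; rewrite Qp_comm.
    rewrite -[in LHS]hab1.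
    have -> : Qp p (Tr A (Qp p Y)) = Qp p (Tr A Y) by apply: opext => x y; rewrite (Qp_Tr_Qp hab).
    rewrite hab1 (comm_C (T := @Qp N gT) (f := Qp p)) //.
    by move=> q _ W; rewrite Qp_comm.
  have -> : Tr A (Qp p Y) = Qp p (Tr A Y) by apply: opext => x y; rewrite Tr_Qp ?hp.
  by rewrite (comm_C (T := @Qp N gT) (f := Qp p)) // => q _ W; rewrite Qp_comm.
have s4 X : (Cs (@Qp N gT) (enum (plaqsOf B))) ((Cs (@Qp N gT) (enum (plaqsOf A))) X) = (Cs (@Qp N gT) (enum (plaqsOf A))) ((Cs (@Qp N gT) (enum (plaqsOf B))) X).
  by rewrite C_comm //; exact: Qp_comm.
rewrite s1 s2 s3 s4 hTr.
by [].
Qed.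

End Main.

Local Close Scope ring_scope.

Theorem mainTheorem12 (N : nat) (gT : finGroupType)
  (hN : (1 < N)%N) (hab : abelian [set: gT])
  (R R' : {set edge N}) (hR : rectangle R) (hR' : rectangle R') :
  [/\ (forall (O : op N gT) x y, E0 (R :|: R') O x y = E0 R (E0 R' O) x y),
      (forall (O : op N gT) x y, PstarV (R :|: R') O x y = PstarV R (PstarV R' O) x y)
    & (forall (O : op N gT) x y, PsqV (R :|: R') O x y = PsqV R (PsqV R' O) x y)].
Proof.
split => O x y.
- by rewrite (part1 hab).
- by rewrite (part2 hab).
- by rewrite (part3 hab).
Qed.
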